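(* Let $(A,\mu,\Delta_r,\alpha,\beta,\psi=\beta,\omega=\alpha)$ be a quasitriangular infinitesimal BiHom-bialgebra with $r=\sum_i x_i\otimes y_i\in A\otimes A$, and write $\Delta=\Delta_r$. Then: (i) $\Delta(a)=\sum_i\alpha(x_i)\otimes y_i\cdot a-\sum_i a\cdot x_i\otimes\beta(y_i)$ for all $a\in A$; (ii) $(\Delta\otimes\beta)(r)=r_{23}r_{13}$; (iii) $(\alpha\otimes\Delta)(r)=-r_{13}r_{12}$. Conversely, if an infinitesimal BiHom-bialgebra $(A,\mu,\Delta,\alpha,\beta,\psi=\beta,\omega=\alpha)$ satisfies (i), (ii) and (iii) for some $r=\sum_i x_i\otimes y_i\in A\otimes A$ with $(\alpha\otimes\alpha)(r)=r=(\beta\otimes\beta)(r)$, then $\Delta=\Delta_r$ and $(A,\mu,\Delta_r,\alpha,\beta,\psi=\beta,\omega=\alpha)$ is a quasitriangular infinitesimal BiHom-bialgebra.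
   Context: Work over a field. A BiHom-associative algebra is a 4-tuple $(A,\mu,\alpha,\beta)$ with $\alpha,\beta$ commuting linear maps, multiplicative for $\mu$ (written $a\cdot b$), and $\alpha(x)\cdot(y\cdot z)=(x\cdot y)\cdot\beta(z)$. A BiHom-coassociative coalgebra is $(C,\Delta,\psi,\omega)$ with $\psi\omega=\omega\psi$, $(\psi\otimes\psi)\Delta=\Delta\psi$, $(\omega\otimes\omega)\Delta=\Delta\omega$ and $(\Delta\otimes\psi)\Delta=(\omega\otimes\Delta)\Delta$. An infinitesimal BiHom-bialgebra is a 7-tuple $(A,\mu,\Delta,\alpha,\beta,\psi,\omega)$ with $(A,\mu,\alpha,\beta)$ BiHom-associative, $(A,\Delta,\psi,\omega)$ BiHom-coassociative, and for all $a,b$ (with $\Delta(a)=a_1\otimes a_2$): $\Delta(a\cdot b)=\omega(a)\cdot b_1\otimes\beta(b_2)+\alpha(a_1)\otimes a_2\cdot\psi(b)$; $\alpha,\beta$ each commute with $\psi,\omega$; $(\alpha\otimes\alpha)\Delta=\Delta\alpha$, $(\beta\otimes\beta)\Delta=\Delta\beta$; $\psi,\omega$ multiplicative. For $r=\sum_i x_i\otimes y_i$ with $(\alpha\otimes\alpha)(r)=r=(\beta\otimes\beta)(r)$, set $\Delta_r(a)=\sum_i\alpha(x_i)\otimes y_i\cdot a-\sum_i a\cdot x_i\otimes\beta(y_i)$, $r_{12}r_{23}=\sum_{i,j}\alpha(x_i)\otimes y_i\cdot x_j\otimes\beta(y_j)$, $r_{13}r_{12}=\sum_{i,j}x_i\cdot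 x_j\otimes\beta(y_j)\otimes\beta(y_i)$, $r_{23}r_{13}=\sum_{i,j}\alpha(x_i)\otimes\alpha(x_j)\otimes y_j\cdot y_i$, and $A(r)=r_{13}r_{12}-r_{12}r_{23}+r_{23}r_{13}$. Actions on $A^{\otimes3}$: $a\bullet(x\otimes y\otimes z)=\alpha(a)\cdot x\otimes\beta(y)\otimes\beta(z)$, $(x\otimes y\otimes z)\bullet a=\alpha(x)\otimes\alpha(y)\otimes z\cdot\beta(a)$. A coboundary infinitesimal BiHom-bialgebra is $(A,\mu,\Delta_r,\alpha,\beta,\psi=\beta,\omega=\alpha)$ where $(A,\mu,\alpha,\beta)$ is BiHom-associative and $r$ satisfies $(\alpha\otimes\alpha)(r)=r=(\beta\otimes\beta)(r)$ and $a\bullet A(r)=A(r)\bullet a$ for all $a$ (such a tuple is an infinitesimal BiHom-bialgebra). It is quasitriangular if moreover $A(r)=0$. *)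

(* Defs.v *)
(* Tensors A^{(x)2}, A^{(x)3} over a field K are represented by
   finite lists of elementary tensors (formal sums), compared up to the equality
   of the tensor product: two formal sums are equal in A (x) A iff every bilinear
   form A x A -> K takes the same value on them (vector spaces over a field). *)
From HB Require Import structures.
From mathcomp Require Import all_boot all_order all_algebra.
Set Implicit Arguments. Unset Strict Implicit. Unset Printing Implicit Defensive.
Import GRing.Theory.
Local Open Scope ring_scope.

Section BiHom.
Variables (K : fieldType) (A : lmodType K).

Definition bilin_form (f : A -> A -> K) :=
  (forall x c y z, f x (c *: y + z) = c * f x y + f x z) /\
  (forall y c x z, f (c *: x + z) y = c * f x y + f z y).

Definition trilin_form (f : A -> A -> A -> K) :=
  [/\ forall x y c z w, f x y (c *: z + w) = c * f x y z + f x y w,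
      forall x z c y w, f x (c *: y + w) z = c * f x y z + f x w z &
      forall y z c x w, f (c *: x + w) y z = c * f x y z + f w y z].

Definition ev2 (f : A -> A -> K) (t : seq (A * A)) := \sum_(p <- t) f p.1 p.2.
Definition ev3 (f : A -> A -> A -> K) (t : seq (A * A * A)) :=
  \sum_(p <- t) f p.1.1 p.1.2 p.2.

Definition teq2 (s t : seq (A * A)) :=
  forall f, bilin_form f -> ev2 f s = ev2 f t.
Definition teq3 (s t : seq (A * A * A)) :=
  forall f, trilin_form f -> ev3 f s = ev3 f t.

Definition neg3 (t : seq (A * A * A)) := [seq (- p.1.1, p.1.2, p.2) | p <- t].

Definition tmap2 (f g : A -> A) (t : seq (A * A)) := [seq (f p.1, g p.2) | p <- t].

(* (D (x) f)(t) and (f (x) D)(t) for D : A -> A (x) A *)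
Definition tDx (D : A -> seq (A * A)) (f : A -> A) (t : seq (A * A)) :=
  flatten [seq [seq (q.1, q.2, f p.2) | q <- D p.1] | p <- t].
Definition txD (f : A -> A) (D : A -> seq (A * A)) (t : seq (A * A)) :=
  flatten [seq [seq (f p.1, q.1, q.2) | q <- D p.2] | p <- t].

Definition bilin_map (mu : A -> A -> A) :=
  (forall x c y z, mu x (c *: y + z) = c *: mu x y + mu x z) /\
  (forall y c x z, mu (c *: x + z) y = c *: mu x y + mu z y).

Definition lin_comul (D : A -> seq (A * A)) :=
  forall c a b, teq2 (D (c *: a + b)) ([seq (c *: q.1, q.2) | q <- D a] ++ D b).

Definition BiHomAssoc (mu : A -> A -> A) (al be : A -> A) :=
  [/\ bilin_map mu,
      forall x, al (be x) = be (al x),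
      forall x y, al (mu x y) = mu (al x) (al y),
      forall x y, be (mu x y) = mu (be x) (be y) &
      forall x y z, mu (al x) (mu y z) = mu (mu x y) (be z)].

Definition BiHomCoassoc (D : A -> seq (A * A)) (psi om : A -> A) :=
  [/\ lin_comul D,
      forall x, psi (om x) = om (psi x),
      forall a, teq2 (tmap2 psi psi (D a)) (D (psi a)),
      forall a, teq2 (tmap2 om om (D a)) (D (om a)) &
      forall a, teq3 (tDx D psi (D a)) (txD om D (D a))].

Definition InfBiHomBialg (mu : A -> A -> A) (D : A -> seq (A * A))
    (al be psi om : A -> A) :=
  BiHomAssoc mu al be /\ BiHomCoassoc D psi om /\
  [/\
      forall a b, teq2 (D (mu a b))
        ([seq (mu (om a) q.1, be q.2) | q <- D b] ++
         [seq (al q.1, mu q.2 (psi b)) | q <- D a]),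
      [/\ forall x, al (psi x) = psi (al x),
          forall x, al (om x) = om (al x),
          forall x, be (psi x) = psi (be x) &
          forall x, be (om x) = om (be x)],
      ((forall a, teq2 (tmap2 al al (D a)) (D (al a))) /\
       (forall a, teq2 (tmap2 be be (D a)) (D (be a)))) &
      ((forall x y, psi (mu x y) = mu (psi x) (psi y)) /\
       (forall x y, om (mu x y) = mu (om x) (om y)))].

Variables (mu : A -> A -> A) (al be : A -> A).

Definition Delta_r (r : seq (A * A)) (a : A) : seq (A * A) :=
  [seq (al p.1, mu p.2 a) | p <- r] ++ [seq (- mu a p.1, be p.2) | p <- r].

(* p = x_i (x) y_i, q = x_j (x) y_j *)
Definition r12r23 (r : seq (A * A)) : seq (A * A * A) :=
  [seq (al p.1, mu p.2 q.1, be q.2) | p <- r, q <- r].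
Definition r13r12 (r : seq (A * A)) : seq (A * A * A) :=
  [seq (mu p.1 q.1, be q.2, be p.2) | p <- r, q <- r].
Definition r23r13 (r : seq (A * A)) : seq (A * A * A) :=
  [seq (al p.1, al q.1, mu q.2 p.2) | p <- r, q <- r].

Definition Ar (r : seq (A * A)) : seq (A * A * A) :=
  r13r12 r ++ neg3 (r12r23 r) ++ r23r13 r.

Definition lact (a : A) (t : seq (A * A * A)) :=
  [seq (mu (al a) p.1.1, be p.1.2, be p.2) | p <- t].
Definition ract (t : seq (A * A * A)) (a : A) :=
  [seq (al p.1.1, al p.1.2, mu p.2 (be a)) | p <- t].

Definition r_invariant (r : seq (A * A)) :=
  teq2 (tmap2 al al r) r /\ teq2 (tmap2 be be r) r.

(* coboundary infinitesimal BiHom-bialgebra (A, mu, Delta_r, al, be, psi = be, om = al);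
   the tuple being an infinitesimal BiHom-bialgebra is recorded explicitly *)
Definition Coboundary (r : seq (A * A)) :=
  [/\ BiHomAssoc mu al be,
      r_invariant r,
      forall a, teq3 (lact a (Ar r)) (ract (Ar r) a) &
      InfBiHomBialg mu (Delta_r r) al be be al].

Definition Quasitriangular (r : seq (A * A)) :=
  Coboundary r /\ teq3 (Ar r) [::].

End BiHom.

(* Main.v *)
Require Import Defs.
From HB Require Import structures.
From mathcomp Require Import all_boot all_order all_algebra.
From mathcomp Require Import ring.
Set Implicit Arguments. Unset Strict Implicit. Unset Printing Implicit Defensive.
Import GRing.Theory.
Local Open Scope ring_scope.

Section H.
Variables (K : fieldType) (A : lmodType K).

Lemma dbl0 (V : zmodType) (v : V) : v = v + v -> v = 0.
Proof. by move=> /(congr1 (fun w => w - v)); rewrite addrK subrr => /esym. Qed.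

Definition lin (g : A -> A) := forall c x y, g (c *: x + y) = c *: g x + g y.

Lemma lin_lin (g : {linear A -> A}) : lin g.
Proof. by move=> c x y; rewrite linearP. Qed.

Lemma lin0 g : lin g -> g 0 = 0.
Proof. move=> H; have := H 1 0 0; rewrite scaler0 addr0 scale1r ; exact: dbl0. Qed.

Lemma linN g x : lin g -> g (- x) = - g x.
Proof. move=> H; have := H (-1) x 0; rewrite addr0 (lin0 H) addr0 !scaleN1r. by []. Qed.

Lemma tri3_0 (f : A -> A -> A -> K) x y : trilin_form f -> f x y 0 = 0.
Proof. case=> H _ _; have := H x y 1 0 0; rewrite scaler0 addr0 mul1r ; exact: dbl0. Qed.
Lemma tri2_0 (f : A -> A -> A -> K) x y : trilin_form f -> f x 0 y = 0.
Proof. case=> _ H _; have := H x y 1 0 0; rewrite scaler0 addr0 mul1r ; exact: dbl0. Qed.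
Lemma tri1_0 (f : A -> A -> A -> K) x y : trilin_form f -> f 0 x y = 0.
Proof. case=> _ _ H; have := H x y 1 0 0; rewrite scaler0 addr0 mul1r ; exact: dbl0. Qed.

Lemma tri1N (f : A -> A -> A -> K) x y z : trilin_form f -> f (- x) y z = - f x y z.
Proof. move=> Hf; have := Hf; case=> _ _ H; have := H y z (-1) x 0.
by rewrite addr0 scaleN1r (tri1_0 _ _ Hf) addr0 mulN1r. Qed.
Lemma tri2N (f : A -> A -> A -> K) x y z : trilin_form f -> f x (- y) z = - f x y z.
Proof. move=> Hf; have := Hf; case=> _ H _; have := H x z (-1) y 0.
by rewrite addr0 scaleN1r (tri2_0 _ _ Hf) addr0 mulN1r. Qed.

Lemma bil1_0 (f : A -> A -> K) x : bilin_form f -> f 0 x = 0.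
Proof. case=> _ H; have := H x 1 0 0; rewrite scaler0 addr0 mul1r ; exact: dbl0. Qed.
Lemma bil1Z (f : A -> A -> K) c x y : bilin_form f -> f (c *: x) y = c * f x y.
Proof. move=> Hf; have := Hf; case=> _ H; have := H y c x 0.
by rewrite addr0 (bil1_0 _ Hf) addr0. Qed.

Lemma ev2_cat (f : A -> A -> K) s t : ev2 f (s ++ t) = ev2 f s + ev2 f t.
Proof. by rewrite /ev2 big_cat. Qed.
Lemma ev3_cat (f : A -> A -> A -> K) s t : ev3 f (s ++ t) = ev3 f s + ev3 f t.
Proof. by rewrite /ev3 big_cat. Qed.
Lemma ev3_neg (f : A -> A -> A -> K) t : trilin_form f -> ev3 f (neg3 t) = - ev3 f t.
Proof. move=> Hf; rewrite /ev3 big_map -sumrN; apply: eq_bigr => p _ /=.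
by rewrite tri1N. Qed.
Lemma ev3_nil (f : A -> A -> A -> K) : ev3 f [::] = 0. Proof. by rewrite /ev3 big_nil. Qed.

Lemma ev2_map (f : A -> A -> K) (g h : A -> A) t :
  ev2 f [seq (g p.1, h p.2) | p <- t] = ev2 (fun x y => f (g x) (h y)) t.
Proof. by rewrite /ev2 big_map. Qed.

Lemma bil_comp (f : A -> A -> K) g h : bilin_form f -> lin g -> lin h ->
  bilin_form (fun x y => f (g x) (h y)).
Proof. move=> [H1 H2] Hg Hh; split=> *; by rewrite ?Hg ?Hh ?H1 ?H2. Qed.

Lemma teq2_map s t g h : teq2 s t -> lin g -> lin h ->
  teq2 [seq (g p.1, h p.2) | p <- s] [seq (g p.1, h p.2) | p <- t].
Proof. move=> E Hg Hh f Hf; rewrite !ev2_map; exact: E (bil_comp Hf Hg Hh). Qed.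

Lemma ev3_tDx (f : A -> A -> A -> K) (D : A -> seq (A * A)) g t :
  ev3 f (tDx D g t) = \sum_(p <- t) ev2 (fun x y => f x y (g p.2)) (D p.1).
Proof. rewrite /ev3 /tDx big_flatten big_map; apply: eq_bigr => p _.
by rewrite big_map. Qed.
Lemma ev3_txD (f : A -> A -> A -> K) (D : A -> seq (A * A)) g t :
  ev3 f (txD g D t) = \sum_(p <- t) ev2 (fun x y => f (g p.1) x y) (D p.2).
Proof. rewrite /ev3 /txD big_flatten big_map; apply: eq_bigr => p _.
by rewrite big_map. Qed.

Lemma tri_bil12 (f : A -> A -> A -> K) k : trilin_form f -> bilin_form (fun x y => f x y k).
Proof. by case=> _ H2 H3; split=> *; rewrite ?H2 ?H3. Qed.
Lemma tri_bil23 (f : A -> A -> A -> K) k : trilin_form f -> bilin_form (fun x y => f k x y).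
Proof. by case=> H1 H2 _; split=> *; rewrite ?H1 ?H2. Qed.

Lemma ev2_lin (D : A -> seq (A * A)) (g : A -> A -> K) c a b : lin_comul D -> bilin_form g ->
  ev2 g (D (c *: a + b)) = c * ev2 g (D a) + ev2 g (D b).
Proof.
move=> HD Hg; rewrite (HD c a b g Hg) ev2_cat; congr (_ + _).
rewrite /ev2 big_map mulr_sumr; apply: eq_bigr => p _ /=; exact: bil1Z.
Qed.


Section Comp.
Variables (mu : A -> A -> A) (al be : A -> A) (r : seq (A * A)).
Variables (f : A -> A -> A -> K) (Hf : trilin_form f).

Lemma L1 : ev3 f (tDx (Delta_r mu al be r) be r) =
  ev3 f (r12r23 mu al be r) - ev3 f (r13r12 mu be r).
Proof.
rewrite ev3_tDx /ev2 /Delta_r /ev3 /r12r23 /r13r12 !big_allpairs_dep /=.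
under eq_bigr do rewrite big_cat !big_map /=.
rewrite big_split /= exchange_big -sumrN; congr (_ + _).
by apply: eq_bigr => p _; rewrite -sumrN; apply: eq_bigr => q _; rewrite tri1N.
Qed.

Lemma L2 : ev3 f (txD al (Delta_r mu al be r) r) =
  ev3 f (r23r13 mu al r) - ev3 f (r12r23 mu al be r).
Proof.
rewrite ev3_txD /ev2 /Delta_r /ev3 /r12r23 /r23r13 !big_allpairs_dep /=.
under eq_bigr do rewrite big_cat !big_map /=.
rewrite big_split /= -sumrN; congr (_ + _).
by apply: eq_bigr => p _; rewrite -sumrN; apply: eq_bigr => q _; rewrite tri2N.
Qed.

Lemma L3 : ev3 f (Ar mu al be r) =
  ev3 f (r13r12 mu be r) - ev3 f (r12r23 mu al be r) + ev3 f (r23r13 mu al r).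
Proof. by rewrite /Ar !ev3_cat ev3_neg // addrA. Qed.
End Comp.

Lemma teq2_refl (s : seq (A * A)) : teq2 s s. Proof. by []. Qed.
Lemma teq2_sym (s t : seq (A * A)) : teq2 s t -> teq2 t s. Proof. by move=> E f Hf; rewrite E. Qed.
Lemma teq2_tr (s t u : seq (A * A)) : teq2 s t -> teq2 t u -> teq2 s u.
Proof. by move=> E1 E2 f Hf; rewrite E1 ?E2. Qed.
Lemma teq2_cat (s s' t t' : seq (A * A)) : teq2 s s' -> teq2 t t' -> teq2 (s ++ t) (s' ++ t').
Proof. by move=> E1 E2 f Hf; rewrite !ev2_cat E1 ?E2. Qed.
Lemma teq2_tmap (s t : seq (A * A)) g h : teq2 s t -> lin g -> lin h -> teq2 (tmap2 g h s) (tmap2 g h t).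
Proof. exact: teq2_map. Qed.

Lemma tri_comp (f : A -> A -> A -> K) g1 g2 g3 : trilin_form f -> lin g1 -> lin g2 -> lin g3 ->
  trilin_form (fun x y z => f (g1 x) (g2 y) (g3 z)).
Proof. move=> [H1 H2 H3] L1 L2 L3; split=> *; by rewrite ?L1 ?L2 ?L3 ?H1 ?H2 ?H3. Qed.

Lemma tDx_sub (D D' : A -> seq (A * A)) g (t t' : seq (A * A)) (f : A -> A -> A -> K) :
  trilin_form f -> lin g -> lin_comul D -> (forall a, teq2 (D a) (D' a)) ->
  teq2 t t' -> ev3 f (tDx D' g t) = ev3 f (tDx D g t').
Proof.
move=> Hf Hg HD E Et; rewrite !ev3_tDx.
transitivity (\sum_(p <- t) ev2 (fun x y => f x y (g p.2)) (D p.1)).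
  by apply: eq_bigr => p _; rewrite (E p.1 _ (tri_bil12 _ Hf)).
apply: (Et (fun x y => ev2 (fun u v => f u v (g y)) (D x))).
split.
  move=> x c y z; rewrite /ev2 mulr_sumr -big_split; apply: eq_bigr => q _ /=.
  by rewrite Hg; case: Hf => ->.
by move=> y c x z; apply: ev2_lin => //; apply: tri_bil12.
Qed.

Lemma txD_sub (D D' : A -> seq (A * A)) g (t t' : seq (A * A)) (f : A -> A -> A -> K) :
  trilin_form f -> lin g -> lin_comul D -> (forall a, teq2 (D a) (D' a)) ->
  teq2 t t' -> ev3 f (txD g D' t) = ev3 f (txD g D t').
Proof.
move=> Hf Hg HD E Et; rewrite !ev3_txD.
transitivity (\sum_(p <- t) ev2 (fun x y => f (g p.1) x y) (D p.2)).
  by apply: eq_bigr => p _; rewrite (E p.2 _ (tri_bil23 _ Hf)).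
apply: (Et (fun x y => ev2 (fun u v => f (g x) u v) (D y))).
split.
  by move=> x c y z; apply: ev2_lin => //; apply: tri_bil23.
move=> y c x z; rewrite /ev2 mulr_sumr -big_split; apply: eq_bigr => q _ /=.
by rewrite Hg; case: Hf => _ _ ->.
Qed.

Lemma transfer (mu : A -> A -> A) (al be : A -> A) (D D' : A -> seq (A * A)) :
  lin al -> lin be ->
  InfBiHomBialg mu D al be be al -> (forall a, teq2 (D a) (D' a)) ->
  InfBiHomBialg mu D' al be be al.
Proof.
move=> Hal Hbe [HA [[Hlin Hc Hpsi Hom Hco] [Hcomp Hcm [Hal2 Hbe2] Hmul]]] E.
have Hmu := HA; case: Hmu => [[Hm1 Hm2] _ _ _ _].
have El : forall a, teq2 (D' a) (D a) by move=> a; apply: teq2_sym.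
have Hl : lin_comul D'.
  move=> c a b g Hg; rewrite ev2_cat -(E (c *: a + b) g Hg) (ev2_lin _ _ _ Hlin Hg).
  rewrite -(E b g Hg); congr (_ + _); rewrite (E a g Hg).
  by rewrite /ev2 big_map mulr_sumr; apply: eq_bigr => q _ /=; rewrite bil1Z.
split=> //; split.
  split=> //.
  - move=> a; apply: teq2_tr (teq2_tmap (El a) Hbe Hbe) _.
    exact: teq2_tr (Hpsi a) (E _).
  - move=> a; apply: teq2_tr (teq2_tmap (El a) Hal Hal) _.
    exact: teq2_tr (Hom a) (E _).
  - move=> a f Hf.
    rewrite (tDx_sub (D := D) _ _ _ _ (El a)) //.
    rewrite (Hco a f Hf).
    by rewrite (txD_sub (D := D) _ _ _ _ (El a)).
split=> //.
- move=> a b; apply: teq2_tr (El _) _; apply: teq2_tr (Hcomp a b) _.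
  apply: teq2_cat.
    by apply: (teq2_map (g := mu (al a)) (h := be)) => // c x y; rewrite Hm1.
  by apply: (teq2_map (g := al) (h := fun y => mu y (be b))) => // c x y; rewrite Hm2.
- split=> a.
    by apply: teq2_tr (teq2_tmap (El a) Hal Hal) _; exact: teq2_tr (Hal2 a) (E _).
  by apply: teq2_tr (teq2_tmap (El a) Hbe Hbe) _; exact: teq2_tr (Hbe2 a) (E _).
Qed.

End H.

Theorem proposition5p8 (K : fieldType) (A : lmodType K) (mu : A -> A -> A)
    (al be : {linear A -> A}) :
  (forall r : seq (A * A),
     Quasitriangular mu al be r ->
     [/\ (forall a, teq2 (Delta_r mu al be r a)
                        ([seq (al p.1, mu p.2 a) | p <- r] ++
                         [seq (- mu a p.1, be p.2) | p <- r])),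
         teq3 (tDx (Delta_r mu al be r) be r) (r23r13 mu al r) &
         teq3 (txD al (Delta_r mu al be r) r) (neg3 (r13r12 mu be r))])
  /\
  (forall (D : A -> seq (A * A)) (r : seq (A * A)),
     InfBiHomBialg mu D al be be al ->
     r_invariant al be r ->
     (forall a, teq2 (D a) ([seq (al p.1, mu p.2 a) | p <- r] ++
                            [seq (- mu a p.1, be p.2) | p <- r])) ->
     teq3 (tDx D be r) (r23r13 mu al r) ->
     teq3 (txD al D r) (neg3 (r13r12 mu be r)) ->
     (forall a, teq2 (D a) (Delta_r mu al be r a)) /\
     Quasitriangular mu al be r).
Proof.
have Hal : lin al := lin_lin al.
have Hbe : lin be := lin_lin be.
split.
  move=> r [_ H0].
  have Ar0 f : trilin_form f -> ev3 f (Ar mu al be r) = 0.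
    by move=> Hf; rewrite (H0 f Hf) ev3_nil.
  split.
  - by move=> a f _.
  - move=> f Hf; rewrite L1 //; have := Ar0 f Hf; rewrite L3 // => h.
    have -> : ev3 f (r23r13 mu al r) =
      ev3 f (r23r13 mu al r) - (ev3 f (r13r12 mu be r) -
         ev3 f (r12r23 mu al be r) + ev3 f (r23r13 mu al r)) by rewrite h subr0.
    ring.
  - move=> f Hf; rewrite L2 // ev3_neg //; have := Ar0 f Hf; rewrite L3 // => h.
    have -> : ev3 f (r23r13 mu al r) =
      ev3 f (r23r13 mu al r) - (ev3 f (r13r12 mu be r) -
         ev3 f (r12r23 mu al be r) + ev3 f (r23r13 mu al r)) by rewrite h subr0.
    ring.
move=> D r HI Hinv HD Hii _.
have E : forall a, teq2 (D a) (Delta_r mu al be r a) := HD.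
have HI' := HI; case: HI' => HA [[Hlin _ _ _ _] _].
have HA' := HA; case: HA' => [[Hm1 Hm2] _ _ _ _].
have Ar0 f : trilin_form f -> ev3 f (Ar mu al be r) = 0.
  move=> Hf; have := Hii f Hf.
  rewrite -(tDx_sub (D := D) (D' := Delta_r mu al be r) (t := r) _ _ _ E (@teq2_refl _ _ r)) //.
  rewrite L1 // L3 // => <-.
  ring.
split=> //; split; last by move=> f Hf; rewrite Ar0 // ev3_nil.
split=> //; last exact: transfer E.
move=> a f Hf.
have Hl : lin (mu (al a)) by move=> c x y; rewrite Hm1.
have Hr : lin (fun z => mu z (be a)) by move=> c x y; rewrite Hm2.
rewrite /lact /ract /ev3 !big_map.
have := Ar0 _ (tri_comp Hf Hl Hbe Hbe); rewrite /ev3 => ->.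
by have := Ar0 _ (tri_comp Hf Hal Hal Hr); rewrite /ev3 => ->.
Qed.
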